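(* Let $G$ be a locally compact group, $\delta>0$, and $\mu$ a continuous unitary character of $G$. Let $f:G\to\mathbb{C}$ be continuous and satisfy $$|f(xy)+\mu(y)f(xy^{-1})-2f(x)f(y)|\le\delta\quad\text{for all }x,y\in G.$$ Then either $f$ is bounded or $f(xy)+\mu(y)f(xy^{-1})=2f(x)f(y)$ for all $x,y\in G$.
   Context: A unitary character is a continuous homomorphism $\mu:G\to\{z\in\mathbb{C}:|z|=1\}$. *)

(* Defs.v *)
From Stdlib Require Import Reals List.
Open Scope R_scope.

Definition Cx : Type := (R * R)%type.
Definition Cadd (z w : Cx) : Cx := (fst z + fst w, snd z + snd w).
Definition Csub (z w : Cx) : Cx := (fst z - fst w, snd z - snd w).
Definition Cmul (z w : Cx) : Cx :=
  (fst z * fst w - snd z * snd w, fst z * snd w + snd z * fst w).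
Definition RtoC (r : R) : Cx := (r, 0).
Definition Cnorm (z : Cx) : R := sqrt (fst z * fst z + snd z * snd z).

Definition subset {T : Type} (A B : T -> Prop) : Prop := forall x, A x -> B x.

Definition compact_in {T : Type} (opn : (T -> Prop) -> Prop) (K : T -> Prop) : Prop :=
  forall (I : Type) (U : I -> T -> Prop),
    (forall i, opn (U i)) ->
    (forall x, K x -> exists i, U i x) ->
    exists l : list I, forall x, K x -> exists i, In i l /\ U i x.

Record LCGroup : Type := {
  carrier :> Type;
  gmul : carrier -> carrier -> carrier;
  ginv : carrier -> carrier;
  gone : carrier;
  gmulA : forall x y z, gmul x (gmul y z) = gmul (gmul x y) z;
  gmul1l : forall x, gmul gone x = x;
  gmulVl : forall x, gmul (ginv x) x = gone;
  opn : (carrier -> Prop) -> Prop;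
  opn_full : opn (fun _ => True);
  opn_union : forall (I : Type) (U : I -> carrier -> Prop),
      (forall i, opn (U i)) -> opn (fun x => exists i, U i x);
  opn_inter : forall U V, opn U -> opn V -> opn (fun x => U x /\ V x);
  hausdorff : forall x y, x <> y -> exists U V, opn U /\ opn V /\ U x /\ V y /\
      (forall z, U z -> V z -> False);
  gmul_cont : forall x y W, opn W -> W (gmul x y) ->
      exists U V, opn U /\ opn V /\ U x /\ V y /\
        (forall u v, U u -> V v -> W (gmul u v));
  ginv_cont : forall W, opn W -> opn (fun x => W (ginv x));
  loc_compact : forall x, exists U K, opn U /\ U x /\ subset U K /\ compact_in opn K
}.

Arguments gmul {_}.
Arguments ginv {_}.

Definition continuousC (G : LCGroup) (f : G -> Cx) : Prop :=
  forall x (eps : R), 0 < eps ->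
    exists U, opn G U /\ U x /\ forall y, U y -> Cnorm (Csub (f y) (f x)) < eps.

Definition unitary_character (G : LCGroup) (mu : G -> Cx) : Prop :=
  continuousC G mu /\
  (forall x, Cnorm (mu x) = 1) /\
  (forall x y, mu (gmul x y) = Cmul (mu x) (mu y)).

Definition boundedC (G : LCGroup) (f : G -> Cx) : Prop :=
  exists M : R, forall x, Cnorm (f x) <= M.

(* Main.v *)
From Stdlib Require Import Reals Lra Classical.
From Coquelicot Require Import Coquelicot.
Require Import Defs.
Open Scope R_scope.

Section GroupFacts.
Variable G : LCGroup.



Lemma gmulV (x : G) : gmul x (ginv x) = gone G.
Proof.
  rewrite <- (gmul1l G (gmul x (ginv x))).
  rewrite <- (gmulVl G (ginv x)) at 1.
  rewrite <- gmulA, (gmulA _ (ginv x) x (ginv x)), gmulVl, gmul1l.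
  apply gmulVl.
Qed.

Lemma gmul1r (x : G) : gmul x (gone G) = x.
Proof. rewrite <- (gmulVl G x), gmulA, gmulV, gmul1l. reflexivity. Qed.

Lemma g_inv_uniq (a b : G) : gmul a b = gone G -> b = ginv a.
Proof.
  intro h. rewrite <- (gmul1l G b), <- (gmulVl G a), <- gmulA, h, gmul1r.
  reflexivity.
Qed.

Lemma ginvK (x : G) : ginv (ginv x) = x.
Proof. symmetry. apply g_inv_uniq. apply gmulVl. Qed.

Lemma ginvM (x y : G) : ginv (gmul x y) = gmul (ginv y) (ginv x).
Proof.
  symmetry. apply g_inv_uniq.
  rewrite gmulA, <- (gmulA _ x y), gmulV, gmul1r, gmulV. reflexivity.
Qed.

Lemma ginv1 : ginv (gone G) = gone G.
Proof. symmetry. apply g_inv_uniq. apply gmul1l. Qed.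
End GroupFacts.

Lemma Cnorm_Cmod (z : Cx) : Cnorm z = Cmod z.
Proof. unfold Cnorm, Cmod. f_equal. simpl. ring. Qed.

Open Scope C_scope.
Notation C0 := (Coquelicot.Complex.RtoC 0%R).
Notation C2 := (Coquelicot.Complex.RtoC 2%R).
Notation C1 := (Coquelicot.Complex.RtoC 1%R).

Definition Ef (G : LCGroup) (mu f : G -> C) (x y : G) : C :=
  f (gmul x y) + mu y * f (gmul x (ginv y)) - C2 * (f x * f y).
Definition Df (G : LCGroup) (f : G -> C) (x y : G) : C :=
  f (gmul x y) - f (gmul y x).

Lemma Cmod_add_le (a b : C) (A B : R) : Cmod a <= A -> Cmod b <= B -> Cmod (a + b) <= (A + B)%R.
Proof. intros; eapply Rle_trans; [apply Cmod_triangle|lra]. Qed.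
Lemma Cmod_sub_le (a b : C) (A B : R) : Cmod a <= A -> Cmod b <= B -> Cmod (a - b) <= (A + B)%R.
Proof. intros; unfold Cminus; apply Cmod_add_le; auto. rewrite Cmod_opp; auto. Qed.
Lemma Cmod_opp_le (a : C) (A : R) : Cmod a <= A -> Cmod (- a) <= A.
Proof. rewrite Cmod_opp; auto. Qed.
Lemma Cmod_mul_le (a b : C) (A B : R) : Cmod a <= A -> Cmod b <= B -> Cmod (a * b) <= (A * B)%R.
Proof.
  intros h1 h2; rewrite Cmod_mult.
  pose proof (Cmod_ge_0 a); pose proof (Cmod_ge_0 b).
  apply Rmult_le_compat; auto.
Qed.
Lemma Cmod_RtoC2 : Cmod (C2) = 2%R.
Proof.
  rewrite Cmod_R. apply Rabs_pos_eq. lra.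
Qed.

Lemma key_lemma (G : LCGroup) (f : G -> C) (Hunb : ~ boundedC G f) (w : C) (K : R)
  (H : forall z, Cmod (w * f z) <= K) : w = C0.
Proof.
  apply NNPP; intro hw. apply Hunb.
  apply Cmod_gt_0 in hw.
  exists (K / Cmod w)%R. intro z. rewrite Cnorm_Cmod.
  specialize (H z). rewrite Cmod_mult in H.
  apply (Rmult_le_reg_l (Cmod w)); auto.
  replace (Cmod w * (K / Cmod w))%R with K by (field; lra). auto.
Qed.

Lemma C2_neq0 : C2 <> C0.
Proof. intro h. injection h. lra. Qed.

Lemma main_C (G : LCGroup) (delta : R) (mu f : G -> C)
  (Hmu1 : forall x, Cmod (mu x) = 1%R)
  (Hmum : forall x y, mu (gmul x y) = mu x * mu y)
  (HE : forall x y, Cmod (Ef G mu f x y) <= delta)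
  (Hunb : ~ boundedC G f) : forall x y, Ef G mu f x y = C0.
Proof.
  assert (mune : forall x, mu x <> C0).
  { intros x h. specialize (Hmu1 x). rewrite h, Cmod_0 in Hmu1. lra. }
  assert (mue : mu (gone G) = C1).
  { assert (h : mu (gone G) = mu (gone G) * mu (gone G)).
    { rewrite <- Hmum, gmul1l. reflexivity. }
    replace (mu (gone G)) with ((mu (gone G) * mu (gone G)) / mu (gone G)) at 1
      by (field; auto).
    rewrite <- h. field. auto. }
  assert (muinv : forall x, mu (ginv x) = / mu x).
  { intro x. assert (h1 : mu x * mu (ginv x) = C1).
    { rewrite <- Hmum, gmulV. exact mue. }
    replace (mu (ginv x)) with (/ mu x * (mu x * mu (ginv x))) by (field; auto).
    rewrite h1. field. auto. }
  assert (fe : f (gone G) = C1).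
  { assert (h : C2 * (C1 - f (gone G)) = C0).
    { apply (key_lemma G f Hunb _ delta). intro z.
      specialize (HE z (gone G)). unfold Ef in HE.
      rewrite gmul1r, ginv1, gmul1r, mue in HE.
      replace (C2 * (C1 - f (gone G)) * f z) with
        (f z + C1 * f z - C2 * (f z * f (gone G))) by ring. exact HE. }
    replace (f (gone G)) with (C1 - / C2 * (C2 * (C1 - f (gone G))))
      by (field; apply C2_neq0).
    rewrite h. ring. }
  assert (HD : forall x y, Cmod (Df G f x y) <= 3 * delta).
  { intros x y.
    assert (eq : Df G f x y = Ef G mu f x y - Ef G mu f y x
                 - mu x * Ef G mu f (gone G) (gmul y (ginv x))).
    { unfold Df, Ef. rewrite !gmul1l, ginvM, ginvK, fe, Hmum, !muinv.
      field. auto. }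
    rewrite eq. replace (3 * delta)%R with (delta + delta + 1 * delta)%R by ring.
    apply Cmod_sub_le; [apply Cmod_sub_le; auto|].
    apply Cmod_mul_le; auto. right; auto. }
  intros x y.
  assert (hK : exists K, forall z, Cmod (C2 * Ef G mu f x y * f z) <= K).
  { eexists. intro z.
    assert (eq : C2 * Ef G mu f x y * f z =
      - Ef G mu f (gmul x y) z - mu y * Ef G mu f (gmul x (ginv y)) z
      - (C2 * f y * (Df G f x z + mu z * Df G f x (ginv z) - Ef G mu f x z)
         - Ef G mu f (gmul z x) y + Df G f z (gmul x y)
         + mu y * Df G f z (gmul x (ginv y))
         - mu z * Ef G mu f (gmul (ginv z) x) y
         + mu z * Df G f (ginv z) (gmul x y)
         + mu z * mu y * Df G f (ginv z) (gmul x (ginv y)))).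
    { unfold Df, Ef. rewrite !gmulA. ring. }
    rewrite eq.
    repeat match goal with
    | |- Cmod (_ + _) <= _ => eapply Cmod_add_le
    | |- Cmod (_ - _) <= _ => eapply Cmod_sub_le
    | |- Cmod (- _) <= _ => eapply Cmod_opp_le
    | |- Cmod (Ef _ _ _ _ _) <= _ => apply HE
    | |- Cmod (Df _ _ _ _) <= _ => apply HD
    | |- Cmod (mu _) <= _ => apply Req_le; apply Hmu1
    | |- Cmod (f y) <= _ => apply Rle_refl
    | |- Cmod (C2) <= _ => apply Req_le; apply Cmod_RtoC2
    | |- Cmod (_ * _) <= _ => eapply Cmod_mul_le
    end. }
  destruct hK as [K hK].
  assert (h : C2 * Ef G mu f x y = C0) by exact (key_lemma G f Hunb _ K hK).
  replace (Ef G mu f x y) with (/ C2 * (C2 * Ef G mu f x y))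
    by (field; apply C2_neq0).
  rewrite h. ring.
Qed.

Close Scope C_scope.

Theorem corollary5p9 (G : LCGroup) (delta : R) (mu f : G -> Cx)
  (Hdelta : 0 < delta) (Hmu : unitary_character G mu) (Hf : continuousC G f)
  (Hineq : forall x y : G,
      Cnorm (Csub (Cadd (f (gmul x y)) (Cmul (mu y) (f (gmul x (ginv y)))))
                  (Cmul (RtoC 2) (Cmul (f x) (f y)))) <= delta) :
  boundedC G f \/
  (forall x y : G,
      Cadd (f (gmul x y)) (Cmul (mu y) (f (gmul x (ginv y))))
      = Cmul (RtoC 2) (Cmul (f x) (f y))).
Proof.
  destruct (classic (boundedC G f)) as [hb|hb]; [left; exact hb|right].
  destruct Hmu as [_ [Hmu1 Hmum]].
  assert (HE : forall x y, Cmod (Ef G mu f x y) <= delta).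
  { intros x y. rewrite <- Cnorm_Cmod. exact (Hineq x y). }
  intros x y.
  assert (Hmu1' : forall x, Cmod (mu x) = 1%R) by (intro z; rewrite <- Cnorm_Cmod; auto).
  pose proof (main_C G delta mu f Hmu1' Hmum HE hb x y) as h.
  unfold Ef in h.
  change (Cplus (f (gmul x y)) (Cmult (mu y) (f (gmul x (ginv y))))
          = Cmult C2 (Cmult (f x) (f y))).
  match goal with |- ?A = ?B => replace A with (Cplus (Cminus A B) B) by ring end.
  rewrite h. ring.
Qed.
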